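(* In the setting described in the context, the elements $1$, $\rho$, $\gamma_j$ ($1\le j\le 6n+1$), $\delta_A$, $\delta_{B,j}^{\pm}$ ($1\le j\le 3n$) and $\delta_{C,j}^{\pm}$ ($1\le j\le 6n+1$) of $K$ are all totally positive.
   Context: For integers $m\ge0$ define integers $x_m,y_m$ by $\frac{x_m+y_m\sqrt5}{2}=\big(\frac{1+\sqrt5}{2}\big)^m$. Let $n\ge0$ be an integer such that $p:=y_{12n+3}^2-1$ and $r:=x_{12n+3}^2-1$ are squarefree, and let $K=\mathbb{Q}(\sqrt5,\sqrt p)$ (note $r=5p$, so $\sqrt r\in K$). Write $X=x_{12n+3}$, $Y=y_{12n+3}$, and $[a,b,c,d]:=a+b\sqrt5+c\sqrt p+d\sqrt r$. Define $\rho:=[\frac{X+Y}{2},0,-\frac12,\frac12]$; for $1\le j\le 6n+1$, $\gamma_j:=[\frac{y_{2j-1}X+1}{2},\frac{x_{2j-1}X-(-1)^j}{10},(-1)^j\frac{x_{2j-1}}{2},(-1)^j\frac{y_{2j-1}}{2}]$; and \[ \delta_A:=\Big[\tfrac14,-\tfrac1{20},0,-\tfrac{1}{5(X+Y)}\Big],\quad \delta_{B,j}^{\pm}:=\Big[\tfrac14,-\tfrac1{20},\pm\tfrac{X-x_{4j-1}}{20p},\mp\tfrac{X-y_{4j-1}}{4r}\Big]\ (1\le j\le 3n), \] \[ \delta_{C,j}^{\pm}:=\Big[\tfrac14,\pm\tfrac1{20},-\tfrac{Y-y_{2j-1}}{4p},\mp\tfrac{Y-x_{2j-1}}{4r}\Big]\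 (1\le j\le 6n+1). \] An element is totally positive if all four of its real conjugates are positive. *)

(* Defs.v *)
From Stdlib Require Import Reals ZArith Lia Lra.
Open Scope R_scope.

(* x_m, y_m : the integers with (x_m + y_m sqrt5)/2 = ((1+sqrt5)/2)^m.
   Multiplying (x + y sqrt5)/2 by (1+sqrt5)/2 gives
   ((x+5y)/2 + ((x+y)/2) sqrt5)/2, whence the recursion below
   (the divisions are exact; see lemma xy_spec). *)
Fixpoint xy (m : nat) : Z * Z :=
  match m with
  | O => (2%Z, 0%Z)
  | S k => let (x, y) := xy k in (((x + 5 * y) / 2)%Z, ((x + y) / 2)%Z)
  end.

Definition xs (m : nat) : Z := fst (xy m).
Definition ys (m : nat) : Z := snd (xy m).

Lemma xy_par : forall m, exists k, (xs m + ys m = 2 * k)%Z.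
Proof.
  unfold xs, ys; induction m as [|m IH].
  - exists 1%Z; reflexivity.
  - cbn [xy]. destruct (xy m) as [x y]; cbn [fst snd] in *. destruct IH as [k Hk].
    assert (Hx : (x + 5 * y = 2 * (k + 2 * y))%Z) by lia.
    rewrite Hx, Hk, !(Z.mul_comm 2), !Z.div_mul by lia.
    exists (k + y)%Z; lia.
Qed.

Lemma xy_spec : forall m,
  (IZR (xs m) + IZR (ys m) * sqrt 5) / 2 = ((1 + sqrt 5) / 2) ^ m.
Proof.
  intro m; induction m as [|m IH].
  - unfold xs, ys; simpl; lra.
  - destruct (xy_par m) as [k Hk].
    cbn [pow]. rewrite <- IH. unfold xs, ys in *. cbn [xy].
    destruct (xy m) as [x y]; cbn [fst snd] in *.
    assert (Hx : (x + 5 * y = 2 * (k + 2 * y))%Z) by lia.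
    rewrite Hx, Hk, !(Z.mul_comm 2), !Z.div_mul by lia.
    assert (H5 : sqrt 5 * sqrt 5 = 5) by (apply sqrt_sqrt; lra).
    apply (f_equal IZR) in Hk. rewrite plus_IZR, mult_IZR in Hk.
    rewrite plus_IZR, mult_IZR. simpl IZR in *.
    replace (IZR x) with (2 * IZR k - IZR y) by lra.
    set (q := sqrt 5) in *.
    transitivity ((IZR k + 2 * IZR y) / 2 + IZR k / 2 * q); [field|].
    transitivity ((1 + q) / 2 * ((2 * IZR k - IZR y + IZR y * q) / 2)
                  - IZR y * (q * q - 5) / 4); [field | rewrite H5; field].
Qed.

Definition squarefree (z : Z) : Prop :=
  forall d : Z, (d * d | z)%Z -> Z.abs d = 1%Z.

Definition Xn (n : nat) : Z := xs (12 * n + 3).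
Definition Yn (n : nat) : Z := ys (12 * n + 3).
Definition pn (n : nat) : Z := (Yn n ^ 2 - 1)%Z.
Definition rn (n : nat) : Z := (Xn n ^ 2 - 1)%Z.

(* An element [a,b,c,d] = a + b sqrt5 + c sqrt p + d sqrt r of
   K = Q(sqrt5, sqrt p), with sqrt r = sqrt5 * sqrt p (r = 5p).
   Coordinates are given as real numbers (they are rational). *)
Record elt := mkElt { ea : R; eb : R; ec : R; ed : R }.

Definition sgn (b : bool) : R := if b then 1 else -1.

(* The four real embeddings of K: sqrt5 |-> s sqrt5, sqrt p |-> t sqrt p,
   hence sqrt r = sqrt5 sqrt p |-> s t sqrt r. *)
Definition embed (p r : Z) (s t : bool) (e : elt) : R :=
  ea e + sgn s * eb e * sqrt 5 + sgn t * ec e * sqrt (IZR p)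
       + sgn s * sgn t * ed e * sqrt (IZR r).

Definition totally_positive (p r : Z) (e : elt) : Prop :=
  forall s t : bool, 0 < embed p r s t e.

Definition one_elt : elt := mkElt 1 0 0 0.

Definition rho (n : nat) : elt :=
  mkElt ((IZR (Xn n) + IZR (Yn n)) / 2) 0 (- (1 / 2)) (1 / 2).

Definition gamma (n j : nat) : elt :=
  let X := IZR (Xn n) in
  let x := IZR (xs (2 * j - 1)) in
  let y := IZR (ys (2 * j - 1)) in
  mkElt ((y * X + 1) / 2) ((x * X - (-1) ^ j) / 10)
        ((-1) ^ j * x / 2) ((-1) ^ j * y / 2).

Definition deltaA (n : nat) : elt :=
  mkElt (1 / 4) (- (1 / 20)) 0 (- (1 / (5 * (IZR (Xn n) + IZR (Yn n))))).

(* sign e = true for the "+" version, false for "-" *)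
Definition deltaB (n j : nat) (e : bool) : elt :=
  let X := IZR (Xn n) in
  mkElt (1 / 4) (- (1 / 20))
        (sgn e * ((X - IZR (xs (4 * j - 1))) / (20 * IZR (pn n))))
        (- sgn e * ((X - IZR (ys (4 * j - 1))) / (4 * IZR (rn n)))).

Definition deltaC (n j : nat) (e : bool) : elt :=
  let Y := IZR (Yn n) in
  mkElt (1 / 4) (sgn e * (1 / 20))
        (- ((Y - IZR (ys (2 * j - 1))) / (4 * IZR (pn n))))
        (- sgn e * ((Y - IZR (xs (2 * j - 1))) / (4 * IZR (rn n)))).

(* Main.v *)
Require Import Defs.
From Stdlib Require Import Reals ZArith Lia Lra.
Open Scope R_scope.

Lemma s5_pos : 0 < sqrt 5.
Proof. apply sqrt_lt_R0; lra. Qed.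
Lemma s5_sq : sqrt 5 * sqrt 5 = 5.
Proof. apply sqrt_sqrt; lra. Qed.
Lemma s5_bounds : 2 < sqrt 5 < 3.
Proof. pose proof s5_pos; pose proof s5_sq; split; nra. Qed.

Lemma psi_spec : forall m,
  (IZR (xs m) - IZR (ys m) * sqrt 5) / 2 = ((1 - sqrt 5) / 2) ^ m.
Proof.
  intro m; induction m as [|m IH].
  - unfold xs, ys; simpl; lra.
  - destruct (xy_par m) as [k Hk].
    cbn [pow]. rewrite <- IH. unfold xs, ys in *. cbn [xy].
    destruct (xy m) as [x y]; cbn [fst snd] in *.
    assert (Hx : (x + 5 * y = 2 * (k + 2 * y))%Z) by lia.
    rewrite Hx, Hk, !(Z.mul_comm 2), !Z.div_mul by lia.
    assert (H5 : sqrt 5 * sqrt 5 = 5) by (apply sqrt_sqrt; lra).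
    apply (f_equal IZR) in Hk. rewrite plus_IZR, mult_IZR in Hk.
    rewrite plus_IZR, mult_IZR. simpl IZR in *.
    replace (IZR x) with (2 * IZR k - IZR y) by lra.
    set (q := sqrt 5) in *.
    transitivity ((IZR k + 2 * IZR y) / 2 - IZR k / 2 * q); [field|].
    transitivity ((1 - q) / 2 * ((2 * IZR k - IZR y - IZR y * q) / 2)
                  - IZR y * (q * q - 5) / 4); [field | rewrite H5; field].
Qed.

Definition phi := (1 + sqrt 5) / 2.

Lemma phi_gt1 : 1.5 < phi.
Proof. unfold phi; pose proof s5_bounds; lra. Qed.

Lemma opp_pow_odd : forall a i, (- a) ^ (2 * i + 1) = - a ^ (2 * i + 1).
Proof.
  intros a i; induction i as [|i IH].
  - simpl; ring.
  - replace (2 * S i + 1)%nat with (S (S (2 * i + 1))) by lia.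
    cbn [pow]. rewrite IH. ring.
Qed.

Lemma odd_xy : forall i,
  IZR (xs (2 * i + 1)) = phi ^ (2 * i + 1) - / phi ^ (2 * i + 1) /\
  IZR (ys (2 * i + 1)) * sqrt 5 = phi ^ (2 * i + 1) + / phi ^ (2 * i + 1).
Proof.
  intro i. pose proof (xy_spec (2 * i + 1)) as H1. pose proof (psi_spec (2 * i + 1)) as H2.
  pose proof phi_gt1.
  assert (Hpsi : (1 - sqrt 5) / 2 = - / phi).
  { assert (Hm : (1 - sqrt 5) / 2 * phi = -1) by (unfold phi; pose proof s5_sq; nra).
    apply Rmult_eq_reg_r with phi; [|lra]. rewrite Hm. field. lra. }
  rewrite Hpsi, opp_pow_odd, pow_inv in H2. fold phi in H1.
  split; lra.
Qed.

Definition EMB (s5 sp : R) (s t : bool) (a b c d : R) :=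
  a + sgn s * b * s5 + sgn t * c * sp + sgn s * sgn t * d * (s5 * sp).

Lemma sq_lt (a b : R) : 0 <= a -> 0 < b -> a * a < b * b -> a < b.
Proof. intros. nra. Qed.

Lemma rho_pos (s5 X Y sp : R) s t :
  s5 * s5 = 5 -> 2 < s5 < 3 -> 0 < sp -> X * X = 5 * (sp * sp) + 1 ->
  Y * Y = sp * sp + 1 -> 0 < X -> 1 < Y ->
  0 < EMB s5 sp s t ((X + Y) / 2) 0 (- (1 / 2)) (1 / 2).
Proof.
  intros H5 Hs Hsp HX HY HX0 HY1.
  assert (sp < Y) by (apply sq_lt; nra).
  assert (Hq : (s5 * sp) * (s5 * sp) = 5 * (sp * sp)) by (rewrite <- H5; ring).
  assert (s5 * sp < X) by (apply sq_lt; nra).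
  assert (0 < s5 * sp) by (apply Rmult_lt_0_compat; lra).
  unfold EMB; destruct s, t; simpl; lra.
Qed.

Lemma gamma_pos (s5 X Y sp eps x y B Bi : R) s t :
  s5 * s5 = 5 -> 2 < s5 < 3 -> 0 < sp -> X * X = 5 * (sp * sp) + 1 ->
  0 < X -> (eps = 1 \/ eps = -1) ->
  x + y * s5 = 2 * B -> x - y * s5 = -2 * Bi -> 0 < B -> 0 < Bi ->
  0 < EMB s5 sp s t ((y * X + 1) / 2) ((x * X - eps) / 10) (eps * x / 2) (eps * y / 2).
Proof.
  intros H5 Hs Hsp HX HX0 He Hp Hm HB HBi.
  assert (Hq : (s5 * sp) * (s5 * sp) = 5 * (sp * sp)) by (rewrite <- H5; ring).
  assert (Hl : s5 * sp < X) by (apply sq_lt; nra).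
  assert (Hxs : x * s5 = 2 * B * s5 - 5 * y) by (rewrite <- H5; nra).
  assert (Hxs' : x * s5 = - 2 * Bi * s5 + 5 * y) by (rewrite <- H5; nra).
  assert (H1 : B * (s5 * X - 5 * sp) > 0).
  { apply Rmult_lt_0_compat; nra. }
  assert (H2 : Bi * (s5 * X - 5 * sp) > 0).
  { apply Rmult_lt_0_compat; nra. }
  assert (H3 : x * s5 * X = 2 * B * s5 * X - 5 * y * X) by (rewrite Hxs; ring).
  assert (H3' : x * s5 * X = - 2 * Bi * s5 * X + 5 * y * X) by (rewrite Hxs'; ring).
  assert (H4 : x * sp + y * s5 * sp = 2 * B * sp) by (rewrite <- Rmult_plus_distr_r, Hp; ring).
  assert (H4' : x * sp - y * s5 * sp = - 2 * Bi * sp) by (rewrite <- Rmult_minus_distr_r, Hm; ring).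
  unfold EMB; destruct He as [-> | ->]; destruct s, t; simpl; nra.
Qed.

Lemma deltaA_pos (s5 X Y sp : R) s t :
  s5 * s5 = 5 -> 2 < s5 < 3 -> 0 < sp -> X * X = 5 * (sp * sp) + 1 ->
  Y * Y = sp * sp + 1 -> 0 < X -> 1 < Y ->
  0 < EMB s5 sp s t (1 / 4) (- (1 / 20)) 0 (- (1 / (5 * (X + Y)))).
Proof.
  intros H5 Hs Hsp HX HY HX0 HY1.
  assert (Hq : (s5 * sp) * (s5 * sp) = 5 * (sp * sp)) by (rewrite <- H5; ring).
  assert (Hl : s5 * sp < X) by (apply sq_lt; nra).
  assert (HsY : (s5 * Y) * (s5 * Y) = 5 * (Y * Y)) by (rewrite <- H5; ring).
  assert (Hu : X < s5 * Y) by (apply sq_lt; nra).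
  assert (0 < s5 * sp) by (apply Rmult_lt_0_compat; lra).
  set (q := 1 / (5 * (X + Y)) * (s5 * sp)).
  assert (Hq1 : q * (5 * (X + Y)) = s5 * sp) by (unfold q; field; lra).
  assert (Hq0 : 0 < q) by (unfold q; apply Rmult_lt_0_compat; [apply Rdiv_lt_0_compat|]; lra).
  assert (Hqb : q < (5 - s5) / 20) by nra.
  unfold EMB; destruct s, t; simpl; unfold q in *; lra.
Qed.

Lemma deltaB_pos (s5 X sp x y B Bi phi : R) s t e :
  s5 * s5 = 5 -> 2 < s5 < 3 -> 0 < sp -> X * X = 5 * (sp * sp) + 1 ->
  0 < X -> phi = (1 + s5) / 2 ->
  x + y * s5 = 2 * B -> x - y * s5 = -2 * Bi -> B * Bi = 1 -> phi <= B -> B <= X ->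
  0 < EMB s5 sp s t (1 / 4) (- (1 / 20))
        (sgn e * ((X - x) / (20 * (sp * sp))))
        (- sgn e * ((X - y) / (4 * (5 * (sp * sp))))).
Proof.
  intros H5 Hs Hsp HX HX0 Hphi Hp Hm HBB HB1 HB2.
  set (F := 5 * sp - sgn s * s5 * sp + sgn t * sgn e * (X - x)
            - sgn s * sgn t * sgn e * (X - y) * s5).
  assert (HE : EMB s5 sp s t (1 / 4) (- (1 / 20))
        (sgn e * ((X - x) / (20 * (sp * sp))))
        (- sgn e * ((X - y) / (4 * (5 * (sp * sp))))) = F / (20 * sp)).
  { unfold EMB, F; field; lra. }
  rewrite HE. apply Rdiv_lt_0_compat; [|lra].
  assert (Hq : (s5 * sp) * (s5 * sp) = 5 * (sp * sp)) by (rewrite <- H5; ring).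
  assert (Hl : s5 * sp < X) by (apply sq_lt; nra).
  assert (Hs5sp : s5 * s5 * sp = 5 * sp) by (rewrite H5; ring).
  set (D := X - s5 * sp).
  assert (HD : D * (X + s5 * sp) = 1) by (unfold D; nra).
  assert (0 < s5 * sp) by (apply Rmult_lt_0_compat; lra).
  assert (HD0 : 0 < D) by (unfold D; lra).
  assert (HBi0 : 0 < Bi) by nra.
  assert (HDB : D <= Bi) by nra.
  assert (HD1 : D < 1) by nra.
  assert (HBi1 : Bi < 1) by nra.
  unfold F, D in *; destruct s, t, e; simpl; nra.
Qed.

Lemma deltaC_pos (s5 Y sp x y B Bi phi : R) s t e :
  s5 * s5 = 5 -> 2 < s5 < 3 -> 0 < sp -> Y * Y = sp * sp + 1 -> 1 < Y ->
  phi = (1 + s5) / 2 ->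
  x + y * s5 = 2 * B -> x - y * s5 = -2 * Bi -> B * Bi = 1 -> phi <= B ->
  B < phi * (Y + sp) ->
  0 < EMB s5 sp s t (1 / 4) (sgn e * (1 / 20))
        (- ((Y - y) / (4 * (sp * sp))))
        (- sgn e * ((Y - x) / (4 * (5 * (sp * sp))))).
Proof.
  intros H5 Hs Hsp HY HY1 Hphi Hp Hm HBB HB1 HB2.
  set (F := 5 * sp + sgn s * sgn e * s5 * sp - sgn t * 5 * (Y - y)
            - sgn s * sgn t * sgn e * (Y - x) * s5).
  assert (HE : EMB s5 sp s t (1 / 4) (sgn e * (1 / 20))
        (- ((Y - y) / (4 * (sp * sp))))
        (- sgn e * ((Y - x) / (4 * (5 * (sp * sp))))) = F / (20 * sp)).
  { unfold EMB, F; field; lra. }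
  rewrite HE. apply Rdiv_lt_0_compat; [|lra].
  assert (Hxs : s5 * x + 5 * y = 2 * s5 * B) by (rewrite <- H5; nra).
  assert (Hxs' : - s5 * x + 5 * y = 2 * s5 * Bi) by (rewrite <- H5; nra).
  set (E := Y - sp).
  assert (Hsp1 : sp < Y) by (apply sq_lt; nra).
  assert (HE1 : E * (Y + sp) = 1) by (unfold E; nra).
  assert (HE0 : 0 < E) by (unfold E; lra).
  assert (HBi0 : 0 < Bi) by nra.
  assert (HEl : E < 1) by nra.
  assert (Hk : 2 * s5 * phi = 5 + s5) by (rewrite Hphi; nra).
  assert (HBiphi : Bi * phi <= 1) by nra.
  assert (Hkey : E < Bi * phi) by nra.
  unfold F, E in *; destruct s, t, e; simpl; nra.
Qed.

Lemma eps_cases : forall j : nat, (-1) ^ j = 1 \/ (-1) ^ j = -1.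
Proof. induction j as [|j [H|H]]; simpl; [left|right|left]; try rewrite H; lra. Qed.

Lemma phi_sq : phi * phi = phi + 1.
Proof. unfold phi; pose proof s5_sq; nra. Qed.

Lemma odd_B : forall i,
  let B := phi ^ (2 * i + 1) in
  IZR (xs (2 * i + 1)) + IZR (ys (2 * i + 1)) * sqrt 5 = 2 * B /\
  IZR (xs (2 * i + 1)) - IZR (ys (2 * i + 1)) * sqrt 5 = -2 * / B /\
  B * / B = 1 /\ phi <= B /\ 0 < / B.
Proof.
  intros i B. destruct (odd_xy i) as [H1 H2]. fold B in H1, H2.
  pose proof phi_gt1.
  assert (HB : phi <= B).
  { unfold B. rewrite <- pow_1 at 1. apply Rle_pow; lra || lia. }
  assert (0 < B) by lra.
  split; [lra|split; [lra|split; [field; lra|split; [lra|]]]].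
  apply Rinv_0_lt_compat; lra.
Qed.

Theorem proposition4p2 (n : nat) :
  squarefree (pn n) -> squarefree (rn n) ->
  let TP := totally_positive (pn n) (rn n) in
  TP one_elt /\
  TP (rho n) /\
  (forall j : nat, (1 <= j <= 6 * n + 1)%nat -> TP (gamma n j)) /\
  TP (deltaA n) /\
  (forall (j : nat) (e : bool), (1 <= j <= 3 * n)%nat -> TP (deltaB n j e)) /\
  (forall (j : nat) (e : bool), (1 <= j <= 6 * n + 1)%nat -> TP (deltaC n j e)).
Proof.
  intros _ _ TP. unfold TP, totally_positive; clear TP. unfold embed.
  pose proof s5_sq as H5. pose proof s5_bounds as Hs. pose proof phi_gt1 as Hphi1.
  pose proof phi_sq as Hphi2.
  destruct (odd_xy (6 * n + 1)) as [HX HY].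
  set (s5 := sqrt 5) in *.
  replace (2 * (6 * n + 1) + 1)%nat with (12 * n + 3)%nat in HX, HY by lia.
  fold (Xn n) in HX. fold (Yn n) in HY.
  set (A := phi ^ (12 * n + 3)) in *.
  assert (HA : phi ^ 3 <= A) by (apply Rle_pow; lra || lia).
  assert (Hphi3 : phi ^ 3 = 2 + s5) by (simpl; unfold phi; fold s5; nra).
  assert (HA0 : 0 < A) by lra.
  set (Ai := / A) in *.
  assert (HAA : A * Ai = 1) by (unfold Ai; field; lra).
  assert (HAi : 0 < Ai) by (unfold Ai; apply Rinv_0_lt_compat; lra).
  set (X := IZR (Xn n)) in *. set (Y := IZR (Yn n)) in *.
  assert (HYs : 0 < (Y - 1) * s5) by lra.
  assert (HY1 : 1 < Y).
  { destruct (Rle_or_lt Y 1); [|assumption]. assert ((1 - Y) * s5 >= 0) by nra. lra. }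
  assert (HAi1 : Ai < 1) by nra.
  assert (HX0 : 0 < X) by lra.
  assert (HXY : X * X = 5 * (Y * Y) - 4).
  { assert (Y * s5 * (Y * s5) = 5 * (Y * Y)) by (rewrite <- H5; ring). nra. }
  assert (Hp : IZR (pn n) = Y * Y - 1).
  { unfold pn. rewrite minus_IZR, Z.pow_2_r, mult_IZR. reflexivity. }
  assert (Hr : IZR (rn n) = 5 * IZR (pn n)).
  { unfold rn. rewrite minus_IZR, Z.pow_2_r, mult_IZR. fold X. rewrite Hp. lra. }
  assert (Hp0 : 0 < IZR (pn n)) by nra.
  assert (Hsr : sqrt (IZR (rn n)) = s5 * sqrt (IZR (pn n))).
  { rewrite Hr. apply sqrt_mult; lra. }
  set (sp := sqrt (IZR (pn n))) in *.
  assert (Hsp0 : 0 < sp) by (apply sqrt_lt_R0; lra).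
  assert (Hspp : sp * sp = IZR (pn n)) by (apply sqrt_sqrt; lra).
  assert (HY2 : Y * Y = sp * sp + 1) by lra.
  assert (HX2 : X * X = 5 * (sp * sp) + 1) by lra.
  assert (Hrr : IZR (rn n) = 5 * (sp * sp)) by lra.
  clearbody sp.
  split; [|split; [|split; [|split; [|split]]]].
  - intros s t; cbn [one_elt ea eb ec ed]. destruct s, t; simpl; lra.
  - intros s t; cbn [rho ea eb ec ed]. rewrite Hsr. fold X Y. apply (rho_pos s5 X Y sp); assumption.
  - intros j Hj s t; cbn [gamma ea eb ec ed]. rewrite Hsr. fold X.
    replace (2 * j - 1)%nat with (2 * (j - 1) + 1)%nat by lia.
    destruct (odd_B (j - 1)) as (Hp1 & Hm1 & HBB & HB1 & HBi).
    set (B := phi ^ (2 * (j - 1) + 1)) in *.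
    apply (gamma_pos s5 X Y sp ((-1) ^ j) _ _ B (/ B)); try assumption.
    + apply eps_cases.
    + lra.
  - intros s t; cbn [deltaA ea eb ec ed]. rewrite Hsr. fold X Y.
    apply (deltaA_pos s5 X Y sp); assumption.
  - intros j e Hj s t; cbn [deltaB ea eb ec ed]. rewrite Hsr, Hrr, <- Hspp. fold X.
    replace (4 * j - 1)%nat with (2 * (2 * j - 1) + 1)%nat by lia.
    assert (Hk : phi ^ (2 * (2 * j - 1) + 1 + 4) <= A) by (apply Rle_pow; lra || lia).
    rewrite pow_add in Hk.
    destruct (odd_B (2 * j - 1)) as (Hp1 & Hm1 & HBB & HB1 & HBi).
    set (B := phi ^ (2 * (2 * j - 1) + 1)) in *.
    assert (H4 : phi ^ 4 = (phi * phi) * (phi * phi)) by ring.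
    assert (H46 : 6 <= phi ^ 4) by nra.
    assert (H6B : 6 * B <= A) by nra.
    assert (HAi4 : Ai <= 1 / 4) by nra.
    apply (deltaB_pos s5 X sp _ _ B (/ B) phi); try assumption.
    + reflexivity.
    + lra.
  - intros j e Hj s t; cbn [deltaC ea eb ec ed]. rewrite Hsr, Hrr, <- Hspp. fold Y.
    replace (2 * j - 1)%nat with (2 * (j - 1) + 1)%nat by lia.
    assert (Hk : phi ^ (2 * (j - 1) + 1 + 2) <= A) by (apply Rle_pow; lra || lia).
    rewrite pow_add in Hk.
    destruct (odd_B (j - 1)) as (Hp1 & Hm1 & HBB & HB1 & HBi).
    set (B := phi ^ (2 * (j - 1) + 1)) in *.
    assert (H2 : phi ^ 2 = phi * phi) by ring.
    assert (H3 : phi * phi * phi = 2 + s5) by (rewrite <- Hphi3; ring).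
    assert (HYB : Y * s5 > B * (phi * phi)) by (rewrite <- H2; lra).
    assert (HYB2 : phi * (Y * s5) > phi * (B * (phi * phi))) by (apply Rmult_lt_compat_l; lra).
    assert (HYB3 : s5 * (phi * Y - B) > 0).
    { assert (B * (phi * phi * phi) = B * (2 + s5)) by (rewrite H3; ring). nra. }
    assert (HYB4 : phi * Y > B) by nra.
    apply (deltaC_pos s5 Y sp _ _ B (/ B) phi); try assumption.
    + reflexivity.
    + nra.
Qed.
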